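(* For all positive integers $k$ and $\ell$ there exists a positive integer $n$ such that (a) $s(nk)=\ell k$, and (b) $n\le \dfrac{2^{\ell k+n_k}-2^{\mu_2(k)}}{k}$.
   Context: $s(m)$ denotes the sum of the binary digits of the positive integer $m$. For a positive integer $k$, $n_k=\lceil \log_2 k\rceil$ (the smallest nonnegative integer $n$ with $k\le 2^n$), and $\mu_2(k)$ is the exponent of $2$ in $k$, i.e. the largest $\alpha\ge 0$ with $2^\alpha\mid k$. *)

(* Defs.v *)
From mathcomp Require Import all_boot.

Fixpoint bsum_aux (fuel m : nat) : nat :=
  match fuel with
  | 0 => 0
  | f.+1 => if m is 0 then 0 else odd m + bsum_aux f m./2
  end.
Definition s (m : nat) : nat := bsum_aux m m.

Definition nk (k : nat) : nat := up_log 2 k.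

Definition mu2 (k : nat) : nat := logn 2 k.

(* Main.v *)
Require Import Defs.
From mathcomp Require Import all_boot.
From mathcomp Require Import cyclic.
From Stdlib Require Import Lia.

Ltac arith :=
  intros; try (apply/leP);
  repeat match goal with H : is_true (leq _ _) |- _ => move/leP: H end;
  repeat match goal with H : @eq nat _ _ |- _ => revert H end;
  rewrite -?muln2 -?multE -?plusE -?minusE; intros; lia.

Lemma bsum_fuel f g m : m <= f -> m <= g -> bsum_aux f m = bsum_aux g m.
Proof.
elim: f g m => [|f IH] [|g] [|m] //= hf hg.
congr (_ + _); apply: IH; change (uphalf m) with (m.+1)./2; rewrite leq_half_double; arith.
Qed.

Lemma sE m : s m = if m is 0 then 0 else odd m + s m./2.
Proof.
rewrite /s; case: m => //= m; congr (_ + _); apply: bsum_fuel => //.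
change (uphalf m) with (m.+1)./2; rewrite leq_half_double; arith.
Qed.

Lemma s0 : s 0 = 0. Proof. by []. Qed.

Lemma s_cons (b : bool) x : s (b + x.*2) = b + s x.
Proof.
rewrite [LHS]sE; case e: (b + x.*2) => [|y].
  by case: b e => //; case: x.
by rewrite -e oddD oddb odd_double addbF half_bit_double.
Qed.

Lemma s_double x : s x.*2 = s x.
Proof. by have := s_cons false x; rewrite add0n. Qed.

Lemma s_add j x y : x < 2 ^ j -> s (x + 2 ^ j * y) = s x + s y.
Proof.
elim: j x => [|j IH] x hx.
  by move: hx; rewrite expn0 ltnS leqn0 => /eqP ->; rewrite mul1n.
have hh : x./2 < 2 ^ j by rewrite ltn_half_double -muln2 mulnC -expnS.
rewrite -[in LHS](odd_double_half x).
have -> : odd x + x./2.*2 + 2 ^ j.+1 * y = odd x + (x./2 + 2 ^ j * y).*2.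
  by rewrite expnS -mulnA mul2n doubleD addnA.
by rewrite s_cons IH // addnA -s_cons odd_double_half.
Qed.

Lemma s_compl j x : x < 2 ^ j -> s x + s (2 ^ j - 1 - x) = j.
Proof.
elim: j x => [|j IH] x hx.
  by move: hx; rewrite expn0 ltnS leqn0 => /eqP ->.
have hh : x./2 < 2 ^ j by rewrite ltn_half_double -muln2 mulnC -expnS.
have hP := IH _ hh.
rewrite -[in LHS](odd_double_half x).
have -> : 2 ^ j.+1 - 1 - (odd x + x./2.*2) = ~~ odd x + (2 ^ j - 1 - x./2).*2.
  move: hh; rewrite expnS; case: (odd x) => /=; arith.
rewrite !s_cons; move: hP; case: (odd x) => /=; arith.
Qed.

Lemma s_mul2exp x mu : s (x * 2 ^ mu) = s x.
Proof.
elim: mu => [|mu IH]; first by rewrite muln1.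
by rewrite expnS mulnCA mul2n s_double.
Qed.

Lemma up_log_mul2 mu q : 0 < q -> up_log 2 (q * 2 ^ mu) = mu + up_log 2 q.
Proof.
move=> hq; elim: mu => [|mu IH]; first by rewrite muln1.
by rewrite expnS mulnCA up_logMp // ?IH // muln_gt0 hq expn_gt0.
Qed.

Lemma totient_lt q : 1 < q -> totient q < q.
Proof.
move=> hq; rewrite totient_count_coprime.
rewrite big_ltn ?(ltnW hq) //.
have -> : coprime q 0 = false by rewrite /coprime gcdn0; case: q hq => [|[|]].
rewrite add0n.
apply: (@leq_ltn_trans (\sum_(1 <= i < q) 1)).
  by apply: leq_sum => i _; case: (coprime q i).
rewrite sum_nat_const_nat muln1; arith.
Qed.

Theorem mainTheorem2 (k l : nat) (hk : 0 < k) (hl : 0 < l) :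
  exists n : nat, 0 < n /\ s (n * k) = l * k /\
    n * k + 2 ^ mu2 k <= 2 ^ (l * k + nk k).
Proof.
have [q cq hkq] := pfactor_coprime (isT : prime 2) hk.
rewrite /mu2 /nk; set mu := logn 2 k in hkq *.
have hq0 : 0 < q by move: hk; rewrite hkq muln_gt0 => /andP[].
have hnk : up_log 2 k = mu + up_log 2 q by rewrite hkq up_log_mul2.
rewrite hnk; set c := up_log 2 q.
have hqc : q <= 2 ^ c := up_logP q (isT : 1 < 2).
have hqk : q <= k by rewrite hkq leq_pmulr // expn_gt0.
have hklk : k <= l * k by rewrite leq_pmull.
have [e [he1 [he2 he3]]] : exists e, 2 ^ e = 1 %[mod q] /\ q <= 2 ^ e /\ e < q.
  case: (ltngtP q 1) => [|hq1|->]; first by rewrite ltnS leqn0 => /eqP q0; move: hq0; rewrite q0.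
    exists (totient q); split; first exact: Euler_exp_totient.
    split; last exact: totient_lt.
    rewrite leqNgt; apply/negP => hlt.
    have h1 : 2 ^ totient q = 1.
      by move: (Euler_exp_totient cq); rewrite modn_small // (modn_small hq1).
    have : 1 < 2 ^ totient q by rewrite -{1}(expn0 2) ltn_exp2l // totient_gt0.
    by rewrite h1.
  by exists 0; rewrite !modn1.
have hce : c <= e := up_log_min (isT : 1 < 2) he2.
set N := l * k + c.
set r := (2 ^ N - 2 ^ c) %% q.
have hr : r < 2 ^ c by apply: leq_trans hqc; rewrite ltn_mod.
set Lw := 2 ^ c - 1 - r.
set Hh := r.*2.
set d := Lw + 2 ^ e * Hh.
have hc0 : 0 < 2 ^ c by rewrite expn_gt0.
have hLw : Lw < 2 ^ e.
  apply: leq_trans (leq_pexp2l (isT : 0 < 2) hce); rewrite /Lw; arith.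
have hdN : d < 2 ^ N.
  have hH : Hh < 2 ^ c.+1 by rewrite /Hh expnS -mul2n ltn_pmul2l.
  have h1 : d < 2 ^ e * 2 ^ c.+1.
    apply: (@leq_trans (2 ^ e * Hh.+1)); last by rewrite leq_pmul2l ?expn_gt0.
    by rewrite mulnS /d ltn_add2r.
  apply: leq_trans h1 _; rewrite -expnD leq_pexp2l //; rewrite /N; arith.
have hsd : s d = c.
  rewrite /d s_add // /Hh s_double /Lw addnC; exact: s_compl.
set m' := 2 ^ N - 1 - d.
have hsm : s m' = l * k.
  have := @s_compl N d hdN; rewrite -/m' hsd /N; arith.
have hdm : d + m' = 2 ^ N - 1 by rewrite /m'; arith.
have hcN : 2 ^ c <= 2 ^ N by rewrite leq_pexp2l // /N leq_addl.
have hmod : m' %% q = 0.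
  have h1 : d = Lw + Hh %[mod q].
    by rewrite /d -modnDmr -modnMml he1 modnMml mul1n modnDmr.
  have h2 : Lw + Hh = 2 ^ c - 1 + r by rewrite /Lw /Hh; move: hr; arith.
  have h3 : 2 ^ c - 1 + r = 2 ^ N - 1 %[mod q].
    rewrite /r modnDmr; congr (_ %% q); move: hc0 hcN; arith.
  have h4 : d + m' = d + 0 %[mod q] by rewrite hdm addn0 h1 h2 h3.
  apply/eqP; rewrite -[0](mod0n q) -(eqn_modDl d); exact/eqP.
have hdiv : q %| m' by rewrite /dvdn hmod.
exists (m' %/ q).
have hnk' : m' %/ q * k = m' * 2 ^ mu by rewrite hkq mulnA divnK.
rewrite hnk' s_mul2exp hsm; split; last split => //.
  rewrite lt0n; apply/negP => /eqP h0.
  move: hnk'; rewrite h0 mul0n => /esym /eqP; rewrite muln_eq0 expn_eq0 /= orbF.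
  move/eqP => hm0; move: hsm; rewrite hm0 s0 => /esym /eqP.
  by rewrite muln_eq0 => /orP [] /eqP h; [move: hl|move: hk]; rewrite h.
have -> : m' * 2 ^ mu + 2 ^ mu = m'.+1 * 2 ^ mu by rewrite mulSn addnC.
rewrite (_ : l * k + (mu + c) = N + mu); last by rewrite /N; arith.
rewrite expnD leq_pmul2r ?expn_gt0 //.
rewrite /m'; move: hdN; arith.
Qed.
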